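(* Let $f(q)=q^{-1}+\sum_{k\geq1}a_kq^k$ be completely $(2{+})$-replicable with replicates $f^{[n]}(q)=q^{-1}+\sum_{k\geq1}a_k^{[n]}q^k$, $n\in\mathbb{N}\cup\sqrt{2}\mathbb{N}$. Then $$\sigma_2\Big(f^{[2]}(2z),\,f^{[\sqrt{2}]}(z),\,f^{[\sqrt{2}]}\big(z+\tfrac12\big),\,f\big(\tfrac{z}{2}\big),\,f\big(\tfrac{z+1}{2}\big)\Big)=2a_2f(z)-f^{[2]}(z)+2(a_4-a_1)+2a_2^{[\sqrt{2}]}-\big(f^{[\sqrt{2}]}(z)\big)^2,$$ where $\sigma_2(x_1,\dots,x_5)=\sum_{1\leq i<j\leq5}x_ix_j$ is the second elementary symmetric function.
   Context: Here $q=e^{2\pi iz}$ and a series $h(q)$ is also written $h(z)$; for integers $a,d>0$ and $b$, $h\big(\frac{az+b}{d}\big)$ denotes the formal series obtained by substituting $q\mapsto e^{2\pi ib/d}q^{a/d}$ (so e.g. $h(z+\frac12)$ means $q\mapsto -q$, $h(\frac{z+1}{2})$ means $q\mapsto -q^{1/2}$). Faber polynomials: for $h=q^{-1}+\sum_{k\geq1}c_kq^k$ with complex coefficients, $P_{n,h}(X)$ is the unique monic polynomial of degree $n$ with $P_{n,h}(h)-q^{-n}$ containing only positive powers of $q$. A series $h$ of this form is $(2{+})$-replicable with $(2{+})$-replicates $h^{[n]},h^{[n\sqrt{2}]}$ ($n\in\mathbb{N}$, series of the same form, $h^{[1]}=h$) if for every $n\geq1$ $$P_{n,h}(h)=\sum_{\substack{ad=n\\0\leq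 b<d}}h^{[a]}\Big(\frac{az+b}{d}\Big)+\sum_{\substack{ad=n\\ d\ \text{even}\\0\leq b<d}}h^{[a\sqrt{2}]}\Big(\frac{2az+b}{d}\Big).$$ $f$ is completely $(2{+})$-replicable with replicates $f^{[n]}$, $n\in\mathbb{N}\cup\sqrt{2}\mathbb{N}$ ($f^{[1]}=f$), if $f$ is $(2{+})$-replicable with these replicates and for every $n\in\mathbb{N}\cup\sqrt{2}\mathbb{N}$ the series $f^{[n]}$ is $(2{+})$-replicable with $(2{+})$-replicates $(f^{[n]})^{[m]}=f^{[mn]}$, $m\in\mathbb{N}\cup\sqrt{2}\mathbb{N}$. *)

(* Defs.v *)
From mathcomp Require Import all_boot all_order all_algebra.
From mathcomp Require Import reals Rstruct.
From mathcomp.real_closed Require Import complex.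
From Stdlib Require Import Rdefinitions Rtrigo_def Rtrigo1.
Set Implicit Arguments. Unset Strict Implicit. Unset Printing Implicit Defensive.
Import GRing.Theory Num.Theory.
Local Open Scope ring_scope.

Notation C := (complex Rdefinitions.R).

Definition zeta (d : nat) (m : int) : C :=
  Complex (cos (2 * PI * m%:~R / d%:R)) (sin (2 * PI * m%:~R / d%:R)).

(* Laur v c represents  t^(-v) * \sum_{k>=0} c k t^k ;
   two representations are compared through their coefficient functions. *)
Record laur := Laur { lv : nat; lc : nat -> C }.

Definition lcoef (L : laur) (m : int) : C :=
  match (m + (lv L)%:Z) with Posz k => lc L k | Negz _ => 0 end.

Definition lzero : laur := Laur 0 (fun _ => 0).
Definition lone : laur := Laur 0 (fun k => if k == O then 1 else 0).
Definition lconst (x : C) : laur := Laur 0 (fun k => if k == O then x else 0).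
Definition ladd (L1 L2 : laur) : laur :=
  let v := maxn (lv L1) (lv L2) in
  Laur v (fun k => lcoef L1 (k%:Z - v%:Z) + lcoef L2 (k%:Z - v%:Z)).
Definition lscale (x : C) (L : laur) : laur := Laur (lv L) (fun k => x * lc L k).
Definition lsub (L1 L2 : laur) : laur := ladd L1 (lscale (-1) L2).
Definition lmul (L1 L2 : laur) : laur :=
  Laur (lv L1 + lv L2) (fun k => \sum_(i < k.+1) lc L1 i * lc L2 (k - i)).
Definition lpow (L : laur) (n : nat) : laur := iter n (lmul L) lone.
Definition leval (P : {poly C}) (L : laur) : laur :=
  \big[ladd/lzero]_(i < size P) lscale P`_i (lpow L i).
Definition leq_ser (L1 L2 : laur) : Prop := forall m : int, lcoef L1 m = lcoef L2 m.

(* A normalized series h = q^-1 + \sum_{k>=1} c k q^k is given by its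
   coefficient function c : nat -> C (the value c 0 is irrelevant).       *)

(* hsub a b d D c : the series h((a z + b)/d), i.e. h with
   q |-> e^(2 pi i b/d) q^(a/d), written as a Laurent series in the variable
   t = q^(1/D) (meaningful when d %| D, so that q^(a/d) = t^(a D/d)).       *)
Definition hsub (a b d D : nat) (c : nat -> C) : laur :=
  let v := divn (muln a D) d in
  Laur v (fun j => if j == O then zeta d (- b%:Z)
                   else if dvdn v j && leq 2 (divn j v)
                        then zeta d (muln b (divn j v).-1)%:Z * c (divn j v).-1
                        else 0).

Definition hser (c : nat -> C) : laur := hsub 1 0 1 1 c.

Definition is_faber (c : nat -> C) (n : nat) (P : {poly C}) : Prop :=
  P \is monic /\ size P = n.+1 /\
  forall m : int, m <= 0 -> lcoef (leval P (hser c)) m = (m == - n%:Z)%:R.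

(* (2+)-replicability of the series with coefficients r 1, with replicates
   h^[a] = series of r a and h^[a sqrt 2] = series of r2 a (a >= 1).
   The n-th identity is stated in the variable t = q^(1/n), in which every
   term h^[a]((az+b)/d) (ad = n) is a Laurent series.                       *)
Definition replicable2 (r r2 : nat -> nat -> C) : Prop :=
  forall n : nat, ltn 0 n -> forall P : {poly C}, is_faber (r 1%N) n P ->
    leq_ser (leval P (hsub 1 0 1 n (r 1%N)))
      (ladd
        (\big[ladd/lzero]_(d < n.+1 | ltn 0 d && (dvdn d n))
           \big[ladd/lzero]_(b < d) hsub (divn n d) b d n (r (divn n d)))
        (\big[ladd/lzero]_(d < n.+1 | [&& ltn 0 d, (dvdn d n) & ~~ odd d])
           \big[ladd/lzero]_(b < d) hsub (muln 2 (divn n d)) b d n (r2 (divn n d)))).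

(* Index set N u sqrt2 N: (m, s) stands for m * sqrt(2)^s (m >= 1). *)
Definition idx_mul (x y : nat * bool) : nat * bool :=
  (muln (muln x.1 y.1) (if x.2 && y.2 then 2 else 1), x.2 (+) y.2).

(* F (m, false) = f^[m], F (m, true) = f^[m sqrt 2]; f = F (1, false). *)
Definition completely_replicable2 (F : nat * bool -> nat -> C) : Prop :=
  forall x : nat * bool, ltn 0 x.1 ->
    replicable2 (fun m => F (idx_mul (m, false) x)) (fun m => F (idx_mul (m, true) x)).

Definition lsigma2 (xs : seq laur) : laur :=
  \big[ladd/lzero]_(i < size xs)
     \big[ladd/lzero]_(j < size xs | ltn i j) lmul (nth lzero xs i) (nth lzero xs j).

(* Main.v *)
Require Import Defs.
From Stdlib Require Import Rdefinitions Raxioms RIneq Rtrigo_def Rtrigo1.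
From mathcomp Require Import all_boot all_order all_algebra.
From mathcomp Require Import reals Rstruct.
From mathcomp.real_closed Require Import complex.
From mathcomp Require Import ring lra zify.
Set Implicit Arguments. Unset Strict Implicit. Unset Printing Implicit Defensive.
Import Order.TTheory GRing.Theory Num.Theory.
Local Open Scope ring_scope.


Lemma cmul_aux (c1 s1 c2 s2 : R) :
  Complex (c1*c2 - s1*s2) (s1*c2 + c1*s2) = Complex c1 s1 * Complex c2 s2 :> C.
Proof. by rewrite /=; congr Complex; ring. Qed.

Lemma zetaD d m1 m2 : zeta d (m1 + m2) = zeta d m1 * zeta d m2.
Proof.
rewrite /zeta intrD.
move: (m1%:~R : R) (m2%:~R : R) (d%:R : R) => a b e.
have -> : Rdiv (Rmult (Rmult (IZR 2) PI) (a + b)) e =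
  Rplus (Rdiv (Rmult (Rmult (IZR 2) PI) a) e) (Rdiv (Rmult (Rmult (IZR 2) PI) b) e).
  by rewrite /Rdiv Rmult_plus_distr_l Rmult_plus_distr_r.
rewrite cos_plus sin_plus.
exact: cmul_aux.
Qed.

Lemma zeta0 d : zeta d 0 = 1.
Proof.
rewrite /zeta. rewrite (_ : Rdiv _ _ = 0%R); last by rewrite /Rdiv /= Rmult_0_r Rmult_0_l.
by rewrite cos_0 sin_0.
Qed.

Lemma zeta_nat d n : zeta d (n%:Z) = zeta d 1 ^+ n.
Proof.
elim: n => [|n IH]; first by rewrite zeta0 expr0.
by rewrite -addn1 PoszD zetaD IH exprD expr1.
Qed.

Lemma zetaN d m : zeta d (- m) * zeta d m = 1.
Proof. by rewrite -zetaD addNr zeta0. Qed.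

Lemma zeta21 : zeta 2 1 = -1.
Proof.
rewrite /zeta (_ : Rdiv _ _ = PI); last first.
  by rewrite RdivE !RmultE IZRposE INRE /=; field.
rewrite cos_PI sin_PI.
by apply/eqP; rewrite eq_complex /= oppr0 !eqxx.
Qed.

Lemma zeta41 : zeta 4 1 = 'i%C.
Proof.
rewrite /zeta (_ : Rdiv _ _ = Rdiv PI (IZR 2)); last first.
  by rewrite !RdivE !RmultE !IZRposE !INRE /=; field.
by rewrite cos_PI2 sin_PI2.
Qed.


Definition Zm (N : nat) (p : {poly C}) := exists r, p = 'X^N * r.
Definition eqm N (p q : {poly C}) := Zm N (p - q).

Section ZmTheory.
Variable N : nat.
Implicit Types p q r : {poly C}.

Lemma Zm0 : Zm N 0. Proof. by exists 0; rewrite mulr0. Qed.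
Lemma ZmD p q : Zm N p -> Zm N q -> Zm N (p + q).
Proof. by move=> [r1 ->] [r2 ->]; exists (r1 + r2); rewrite mulrDr. Qed.
Lemma ZmN p : Zm N p -> Zm N (- p).
Proof. by move=> [r1 ->]; exists (- r1); rewrite mulrN. Qed.
Lemma ZmB p q : Zm N p -> Zm N q -> Zm N (p - q).
Proof. by move=> hp hq; apply: ZmD => //; apply: ZmN. Qed.
Lemma ZmMl p q : Zm N p -> Zm N (q * p).
Proof. by move=> [r1 ->]; exists (q * r1); rewrite mulrCA. Qed.
Lemma ZmMr p q : Zm N p -> Zm N (p * q).
Proof. by move=> h; rewrite mulrC; apply: ZmMl. Qed.
Lemma ZmZ a p : Zm N p -> Zm N (a *: p).
Proof. by move=> h; rewrite -mul_polyC; apply: ZmMl. Qed.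
Lemma ZmXn p : Zm N ('X^N * p). Proof. by exists p. Qed.
Lemma Zm_sum I (s : seq I) (P : pred I) (F : I -> {poly C}) :
  (forall i, P i -> Zm N (F i)) -> Zm N (\sum_(i <- s | P i) F i).
Proof. by move=> h; apply: (big_ind (Zm N)) => //; [apply: Zm0 | apply: ZmD]. Qed.

Lemma ZmP p : Zm N p <-> (forall k, (k < N)%N -> p`_k = 0).
Proof.
split=> [[r ->] k kN|h]; first by rewrite coefXnM kN.
exists (drop_poly N p).
rewrite -{1}(poly_take_drop N p) mulrC (_ : take_poly N p = 0) ?add0r //.
by apply/polyP => k; rewrite coef_take_poly coef0; case: ifP => // /h.
Qed.

Lemma Zm_le M p : (M <= N)%N -> Zm N p -> Zm M p.
Proof. by move=> MN [r ->]; exists ('X^(N - M) * r); rewrite mulrA -exprD subnKC. Qed.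

Lemma Zm_comp p (g : C) s : (0 < s)%N -> Zm N p -> Zm N (p \Po (g *: 'X^s)).
Proof.
move=> s0 [r ->]; rewrite comp_polyM comp_Xn_poly exprZn -exprM.
exists (g ^+ N *: 'X^((s - 1) * N) * (r \Po (g *: 'X^s))).
rewrite -!scalerAl -scalerAr mulrA -exprD; congr (_ *: (_ ^+ _ * _)).
by rewrite mulnBl mul1n subnKC // leq_pmull.
Qed.

Lemma eqm_refl p : eqm N p p. Proof. by rewrite /eqm subrr; apply: Zm0. Qed.
Lemma eqm_eq p q : p = q -> eqm N p q. Proof. by move=> ->; apply: eqm_refl. Qed.
Lemma eqm_sym p q : eqm N p q -> eqm N q p.
Proof. by move=> h; rewrite /eqm -opprB; apply: ZmN. Qed.
Lemma eqm_trans p q r : eqm N p q -> eqm N q r -> eqm N p r.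
Proof. by move=> h1 h2; rewrite /eqm (_ : p - r = (p - q) + (q - r)); [apply: ZmD|ring]. Qed.
Lemma eqmD p p' q q' : eqm N p p' -> eqm N q q' -> eqm N (p + q) (p' + q').
Proof. by move=> h1 h2; rewrite /eqm (_ : _ - _ = (p - p') + (q - q')); [apply: ZmD|ring]. Qed.
Lemma eqmN p p' : eqm N p p' -> eqm N (- p) (- p').
Proof. by move=> h1; rewrite /eqm (_ : _ - _ = - (p - p')); [apply: ZmN|ring]. Qed.
Lemma eqmM p p' q q' : eqm N p p' -> eqm N q q' -> eqm N (p * q) (p' * q').
Proof.
move=> h1 h2; rewrite /eqm (_ : _ - _ = (p - p') * q + p' * (q - q')); last by ring.
by apply: ZmD; [apply: ZmMr | apply: ZmMl].
Qed.
Lemma eqmZ a p p' : eqm N p p' -> eqm N (a *: p) (a *: p').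
Proof. by move=> h; rewrite /eqm -scalerBr; apply: ZmZ. Qed.
Lemma eqm_sum I (s : seq I) (P : pred I) (F G : I -> {poly C}) :
  (forall i, P i -> eqm N (F i) (G i)) ->
  eqm N (\sum_(i <- s | P i) F i) (\sum_(i <- s | P i) G i).
Proof. by move=> h; rewrite /eqm -sumrB; apply: Zm_sum. Qed.
Lemma eqmZm p q : eqm N p q -> Zm N p -> Zm N q.
Proof. by move=> h1 h2; rewrite (_ : q = p - (p - q)); [apply: ZmB | ring]. Qed.
End ZmTheory.

Lemma lcoef_small L m : (m + (lv L)%:Z < 0) -> lcoef L m = 0.
Proof. by rewrite /lcoef; case: (m + _). Qed.

Lemma lcoefD L1 L2 m : lcoef (ladd L1 L2) m = lcoef L1 m + lcoef L2 m.
Proof.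
rewrite {1}/lcoef /=; set v := maxn _ _.
case E: (m + v%:Z) => [k|k].
  by rewrite (_ : k%:Z - v%:Z = m) // -E addrK.
have hv : m + v%:Z < 0 by rewrite E.
rewrite !lcoef_small ?addr0 //; apply: (le_lt_trans _ hv); rewrite lerD2l lez_nat /v.
  exact: leq_maxr.
exact: leq_maxl.
Qed.

Lemma lcoefZ x L m : lcoef (lscale x L) m = x * lcoef L m.
Proof. by rewrite /lcoef /=; case: (m + _) => //; rewrite mulr0. Qed.

Lemma lcoef0 m : lcoef lzero m = 0.
Proof. by rewrite /lcoef /=; case: (m + _). Qed.

Lemma lcoefC x m : lcoef (lconst x) m = if m == 0 then x else 0.
Proof. by rewrite /lcoef /= addr0; case: m. Qed.

Definition pL (V N : nat) (L : laur) : {poly C} := \poly_(j < N) lcoef L (j%:Z - V%:Z).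

Lemma pLD V N L1 L2 : pL V N (ladd L1 L2) = pL V N L1 + pL V N L2.
Proof. by apply/polyP => k; rewrite coefD !coef_poly lcoefD; case: ifP; rewrite ?addr0. Qed.
Lemma pLZ V N x L : pL V N (lscale x L) = x *: pL V N L.
Proof. by apply/polyP => k; rewrite coefZ !coef_poly lcoefZ; case: ifP; rewrite ?mulr0. Qed.
Lemma pL0 V N : pL V N lzero = 0.
Proof. by apply/polyP => k; rewrite coef0 !coef_poly lcoef0; case: ifP. Qed.
Lemma pL_sum V N I (s : seq I) (P : pred I) (F : I -> laur) :
  pL V N (\big[ladd/lzero]_(i <- s | P i) F i) = \sum_(i <- s | P i) pL V N (F i).
Proof. by apply: (big_morph (pL V N)); [apply: pLD | apply: pL0]. Qed.
Lemma pL_eq V N L1 L2 : leq_ser L1 L2 -> pL V N L1 = pL V N L2.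
Proof. by move=> h; apply/polyP => k; rewrite !coef_poly h. Qed.
Lemma pL_sub V N L1 L2 : pL V N (lsub L1 L2) = pL V N L1 - pL V N L2.
Proof. by rewrite /lsub pLD pLZ scaleN1r. Qed.

Lemma pL_shift V e N L : (lv L <= V)%N -> eqm N (pL (V + e) N L) ('X^e * pL V N L).
Proof.
move=> hV; apply/ZmP => k kN; rewrite coefB coefXnM !coef_poly kN.
case: ltnP => ke.
  rewrite subr0 lcoef_small // addrAC subr_lt0 -PoszD ltz_nat.
  by apply: (@leq_trans (e + lv L)); rewrite ?ltn_add2r // addnC leq_add2r.
rewrite (_ : (k - e < N)%N); last by apply: leq_ltn_trans kN; apply: leq_subr.
by rewrite -subzn // PoszD (_ : k%:Z - (V%:Z + e%:Z) = k%:Z - e%:Z - V%:Z) ?subrr //; ring.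
Qed.

Lemma pL_base N L : pL (lv L) N L = \poly_(j < N) lc L j.
Proof. by apply/polyP => k; rewrite !coef_poly /lcoef subrK. Qed.


Lemma pL_mul0 N L1 L2 :
  eqm N (pL (lv L1 + lv L2) N (lmul L1 L2)) (pL (lv L1) N L1 * pL (lv L2) N L2).
Proof.
have -> : pL (lv L1 + lv L2) N (lmul L1 L2) = \poly_(j < N) lc (lmul L1 L2) j.
  exact: (pL_base N (lmul L1 L2)).
rewrite !pL_base; apply/ZmP => k kN; rewrite coefB coefM coef_poly kN /=.
apply/eqP; rewrite subr_eq0; apply/eqP; apply: eq_bigr => i _.
have ik : (i <= k)%N by rewrite -ltnS.
rewrite !coef_poly (leq_ltn_trans ik kN) (leq_ltn_trans (leq_subr i k) kN) //.
Qed.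

Lemma pL_mul V1 V2 N L1 L2 : (lv L1 <= V1)%N -> (lv L2 <= V2)%N ->
  eqm N (pL (V1 + V2) N (lmul L1 L2)) (pL V1 N L1 * pL V2 N L2).
Proof.
move=> h1 h2.
rewrite -(subnKC h1) -(subnKC h2).
set e1 := (V1 - lv L1)%N; set e2 := (V2 - lv L2)%N.
rewrite (_ : (lv L1 + e1 + (lv L2 + e2) = (lv L1 + lv L2) + (e1 + e2))%N); last by lia.
apply: eqm_trans; first exact: (pL_shift (e1 + e2) N (L := lmul L1 L2) (leqnn _)).
apply: eqm_trans; first by apply: eqmM; [apply: eqm_refl | apply: pL_mul0].
apply: eqm_trans; last first.
  by apply: eqmM; apply: eqm_sym; apply: pL_shift.
by apply: eqm_eq; rewrite exprD; ring.
Qed.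

Lemma lpowS L i : lpow L i.+1 = lmul L (lpow L i). Proof. by []. Qed.
Lemma lv_pow L i : lv (lpow L i) = (i * lv L)%N.
Proof. by elim: i => // i IH; rewrite lpowS /= IH mulSn. Qed.

Lemma pL_one N : (0 < N)%N -> pL 0 N lone = 1.
Proof.
move=> N0; apply/polyP => k; rewrite coef_poly coef1 /lcoef /=.
rewrite !addn0; case: ifP => [_|/negbT]; first by case: eqP.
rewrite -leqNgt; case: k => [|k] hk //.
by move: (leq_trans N0 hk).
Qed.

Lemma pL_pow V N L i : (lv L <= V)%N -> (0 < N)%N ->
  eqm N (pL (i * V) N (lpow L i)) (pL V N L ^+ i).
Proof.
move=> hV N0; elim: i => [|i IH]; first by rewrite mul0n pL_one // expr0; apply: eqm_refl.
rewrite mulSn lpowS exprS.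
apply: eqm_trans; first apply: pL_mul => //.
  by rewrite lv_pow leq_mul.
by apply: eqmM => //; apply: eqm_refl.
Qed.

Lemma pL_eval (P : {poly C}) L n V N : (size P <= n.+1)%N -> (lv L <= V)%N -> (0 < N)%N ->
  eqm N (pL (n * V) N (leval P L))
        (\sum_(i < size P) P`_i *: ('X^((n - i) * V) * pL V N L ^+ i)).
Proof.
move=> hP hV N0; rewrite /leval pL_sum; apply: eqm_sum => i _; rewrite pLZ; apply: eqmZ.
have hi : (i <= n)%N by rewrite -ltnS (leq_trans (ltn_ord i) hP).
rewrite (_ : (n * V = i * V + (n - i) * V)%N); last by rewrite -mulnDl subnKC.
apply: eqm_trans; first apply: pL_shift.
  by rewrite lv_pow leq_mul.
by apply: eqmM; [apply: eqm_refl | apply: pL_pow].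
Qed.


Lemma coef_comp_scaleX (p : {poly C}) g j : (p \Po (g *: 'X))`_j = g ^+ j * p`_j.
Proof.
rewrite coef_comp_poly.
under eq_bigr do rewrite exprZn coefZ coefXn.
case: (ltnP j (size p)) => hj.
  rewrite (bigD1 (Ordinal hj)) //= eqxx mulr1 big1 ?addr0; first by rewrite mulrC.
  by move=> i /eqP hi; rewrite (_ : (j == i) = false) ?mulr0 //; apply/eqP => E; apply: hi; apply: val_inj.
rewrite big1 ?nth_default ?mulr0 //.
by move=> i _; rewrite (_ : (j == i) = false) ?mulr0 //; apply/negbTE; rewrite neq_ltn (leq_trans (ltn_ord i) hj) orbT.
Qed.

Lemma coef_comp_sX (p : {poly C}) g s k : (0 < s)%N ->
  (p \Po (g *: 'X^s))`_k = if (s %| k)%N then g ^+ (k %/ s) * p`_(k %/ s) else 0.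
Proof.
move=> s0.
rewrite (_ : g *: 'X^s = (g *: 'X) \Po 'X^s); last by rewrite comp_polyZ comp_polyX.
by rewrite comp_polyA coef_comp_poly_Xn // coef_comp_scaleX.
Qed.

Definition sc (c : nat -> C) (k : nat) : C :=
  match k with 0 => 1 | 1 => 0 | S k' => c k' end.
Definition Sc (c : nat -> C) N : {poly C} := \poly_(k < N) sc c k.


Lemma pL_hsub0 a b d D c N : (0 < (a * D) %/ d)%N ->
  eqm N (pL ((a * D) %/ d) N (hsub a b d D c))
        (zeta d (- b%:Z) *: (Sc c N \Po (zeta d b%:Z *: 'X^((a * D) %/ d)))).
Proof.
set v := ((a * D) %/ d)%N => v0.
have -> : pL v N (hsub a b d D c) = \poly_(j < N) lc (hsub a b d D c) j.
  exact: (pL_base N (hsub a b d D c)).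
apply/ZmP => k kN; rewrite coefB coefZ coef_comp_sX // !coef_poly kN /=.
rewrite -/v.
case: eqP => [->|k0].
  by rewrite dvdn0 div0n expr0 mul1r /= (leq_ltn_trans (leq0n _) kN) mulr1 subrr.
case vk: (v %| k)%N; last by rewrite andFb mulr0 subrr.
rewrite andTb.
have mN : (k %/ v < N)%N by apply: leq_ltn_trans kN; apply: leq_div.
rewrite mN.
have m0 : (0 < k %/ v)%N.
  by rewrite divn_gt0 // dvdn_leq //; case: k k0 {kN mN vk} => //; rewrite lt0n.
move: m0; case E: (k %/ v)%N => [|[|m]] // _.
  by rewrite /= mulr0 mulr0 subrr.
change (1 < m.+2)%N with true; change (m.+2).-1 with m.+1; change (sc c m.+2) with (c m.+1).
rewrite (zeta_nat d b) (zeta_nat d (b * m.+1)) -exprM mulrA.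
have -> : zeta d (- b%:Z) * zeta d 1 ^+ (b * m.+2) = zeta d 1 ^+ (b * m.+1).
  by rewrite mulnS exprD mulrA -(zeta_nat d b) zetaN mul1r.
by rewrite subrr.
Qed.

Lemma pL_hsub a b d D c V N : (0 < (a * D) %/ d)%N -> ((a * D) %/ d <= V)%N ->
  eqm N (pL V N (hsub a b d D c))
     ('X^(V - (a * D) %/ d) * (zeta d (- b%:Z) *: (Sc c N \Po (zeta d b%:Z *: 'X^((a * D) %/ d))))).
Proof.
move=> v0 hV; rewrite -{1}(subnKC hV).
apply: eqm_trans; first by apply: (pL_shift _ _ (L := hsub a b d D c)).
by apply: eqmM; [apply: eqm_refl | apply: pL_hsub0].
Qed.


Lemma eqmX N p q i : eqm N p q -> eqm N (p ^+ i) (q ^+ i).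
Proof.
move=> h; elim: i => [|i IH]; first by rewrite !expr0; apply: eqm_refl.
by rewrite !exprS; apply: eqmM.
Qed.

Lemma pL_hser c N : eqm N (pL 1 N (hser c)) (Sc c N).
Proof.
apply: eqm_trans; first exact: (pL_hsub 0 c (a := 1) (d := 1) (D := 1) (V := 1) N).
have z1 : zeta 1 (- 0%:Z) = 1 := zeta0 1.
have z2 : zeta 1 0%:Z = 1 := zeta0 1.
by rewrite /= ?z1 ?z2 !scale1r expr0 mul1r comp_polyXr; apply: eqm_refl.
Qed.

Lemma lv_leval (P : {poly C}) L : (lv (leval P L) <= (size P).-1 * lv L)%N.
Proof.
rewrite /leval; apply: (big_ind (fun L' => lv L' <= (size P).-1 * lv L)%N) => //.
  by move=> x y hx hy /=; rewrite geq_max hx hy.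
move=> i _ /=; rewrite lv_pow leq_mul2r -ltnS prednK ?ltn_ord ?orbT //.
by apply: leq_ltn_trans (ltn_ord i).
Qed.

Lemma faber_crit c n (P : {poly C}) : P \is monic -> size P = n.+1 ->
  eqm n.+1 (\sum_(i < n.+1) P`_i *: ('X^(n - i) * Sc c n.+1 ^+ i)) 1 -> is_faber c n P.
Proof.
move=> mP sP hE; split => //; split => // m m0.
have hv : (lv (leval P (hser c)) <= n)%N.
  apply: (leq_trans (lv_leval P (hser c))); rewrite sP; change (lv (hser c)) with 1%N; by rewrite muln1.
case: (boolP (m + n%:Z < 0)) => hm.
  rewrite lcoef_small; last first.
    apply: (le_lt_trans _ hm); rewrite lerD2l lez_nat; exact: hv.
  case: eqP => // E; move: hm; rewrite E addNr ltxx //.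
case E: (m + n%:Z) => [j|j]; last by rewrite E in hm.
have mj : m = j%:Z - n%:Z by rewrite -E addrK.
have jn : (j <= n)%N by rewrite -lez_nat -E gerDr.
have h1 : eqm n.+1 (pL (n * 1) n.+1 (leval P (hser c))) 1.
  apply: eqm_trans; first by apply: pL_eval; rewrite ?sP.
  apply: eqm_trans hE; rewrite sP; apply: eqm_sum => i _.
  by apply: eqmZ; rewrite muln1; apply: eqmM; [apply: eqm_refl | apply: eqmX; apply: pL_hser].
move/ZmP: h1 => /(_ j); rewrite ltnS jn coefB coef1 coef_poly ltnS jn muln1 -mj => /(_ isT)/eqP.
rewrite subr_eq0 => /eqP ->; congr (_%:R).
rewrite mj (_ : (j%:Z - n%:Z == - n%:Z) = (j%:Z == 0)); last by rewrite -subr_eq0 opprK subrK.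
by [].
Qed.

Definition P2 (c : nat -> C) : {poly C} := 'X^2 - (2 * c 1%N)%:P.

Lemma faber2 c : is_faber c 2 (P2 c).
Proof.
apply: faber_crit; [exact: monicXnsubC | exact: size_XnsubC |].
have -> : Sc c 3 = 1 + (c 1%N)%:P * 'X^2.
  apply/polyP => k; rewrite coef_poly coefD coef1 coefCM coefXn.
  by case: k => [|[|[|k]]] //=; rewrite ?mulr0 ?mulr1 ?addr0 ?add0r.
rewrite !big_ord_recr big_ord0 /= /P2 !coefB !coefXn !coefC /=.
exists ((c 1%N ^+ 2)%:P * 'X).
rewrite -!mul_polyC; ring.
Qed.

Definition P4 (c : nat -> C) : {poly C} :=
  'X^4 + \poly_(i < 4) [:: 2 * c 1%N ^+ 2 - 4 * c 3%N; - (4 * c 2%N); - (4 * c 1%N); 0]`_i.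

Lemma faber4 c : is_faber c 4 (P4 c).
Proof.
rewrite /P4; set q := \poly_(i < 4) _.
have sq : (size q < size ('X^4 : {poly C}))%N by rewrite size_polyXn ltnS size_poly.
have hs : size ('X^4 + q) = 5%N by rewrite size_polyDl // size_polyXn.
apply: faber_crit => //.
  by rewrite monicE lead_coefDl // lead_coefXn.
have -> : Sc c 5 = 1 + (c 1%N)%:P * 'X^2 + (c 2%N)%:P * 'X^3 + (c 3%N)%:P * 'X^4.
  apply/polyP => k; rewrite coef_poly !coefD coef1 !coefCM !coefXn.
  by case: k => [|[|[|[|[|k]]]]] //=; rewrite ?mulr0 ?mulr1 ?addr0 ?add0r.
rewrite !big_ord_recr big_ord0 /= /q !coefD !coefXn !coef_poly /=.
exists (((4 * c 1 ^+ 1 * c 3 ^+ 1) + (2 * c 2 ^+ 2))%:P * 'X^1 + ((4 * c 1 ^+ 2 * c 2 ^+ 1) + (8 * c 2 ^+ 1 * c 3 ^+ 1))%:P * 'X^2 + ((1 * c 1 ^+ 4) + (4 * c 1 ^+ 2 * c 3 ^+ 1) + (8 * c 1 ^+ 1 * c 2 ^+ 2) + (6 * c 3 ^+ 2))%:P * 'X^3 + ((4 * c 1 ^+ 3 * c 2 ^+ 1) + (16 * c 1 ^+ 1 * c 2 ^+ 1 * c 3 ^+ 1) + (4 * c 2 ^+ 3))%:P * 'X^4 + ((4 * c 1 ^+ 3 * c 3 ^+ 1) + (6 * c 1 ^+ 2 * c 2 ^+ 2) + (8 * c 1 ^+ 1 * c 3 ^+ 2) + (12 * c 2 ^+ 2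 * c 3 ^+ 1))%:P * 'X^5 + ((12 * c 1 ^+ 2 * c 2 ^+ 1 * c 3 ^+ 1) + (4 * c 1 ^+ 1 * c 2 ^+ 3) + (12 * c 2 ^+ 1 * c 3 ^+ 2))%:P * 'X^6 + ((6 * c 1 ^+ 2 * c 3 ^+ 2) + (12 * c 1 ^+ 1 * c 2 ^+ 2 * c 3 ^+ 1) + (4 * c 3 ^+ 3) + (1 * c 2 ^+ 4))%:P * 'X^7 + ((12 * c 1 ^+ 1 * c 2 ^+ 1 * c 3 ^+ 2) + (4 * c 2 ^+ 3 * c 3 ^+ 1))%:P * 'X^8 + ((4 * c 1 ^+ 1 * c 3 ^+ 3) + (6 * c 2 ^+ 2 * c 3 ^+ 2))%:P * 'X^9 + ((4 * c 2 ^+ 1 * c 3 ^+ 3))%:P * 'X^10 + ((1 * c 3 ^+ 4))%:P * 'X^11).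
rewrite -!mul_polyC; ring.
Qed.


Notation ii := ('i%C : C).

Lemma i2 : ii ^+ 2 = -1. Proof. exact: sqr_i. Qed.
Lemma i3 : ii ^+ 3 = - ii. Proof. by rewrite exprS i2 mulrN1. Qed.
Lemma i4 : ii ^+ 4 = 1. Proof. by rewrite (exprM ii 2 2) i2 expr2 mulrNN mulr1. Qed.
Lemma imi : ii * - ii = 1. Proof. by rewrite mulrN -expr2 i2 opprK. Qed.

Lemma inv_i z : z * ii = 1 -> z = - ii.
Proof. by move=> h; rewrite -[z]mulr1 -imi mulrA h mul1r. Qed.

Lemma zeta2m1 : zeta 2 (- 1%:Z) = -1.
Proof. by move: (zetaN 2 1); rewrite zeta21 mulrN1 => /eqP; rewrite eqr_oppLR => /eqP. Qed.
Lemma zeta42 : zeta 4 2%:Z = -1. Proof. by rewrite zeta_nat zeta41 i2. Qed.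
Lemma zeta43 : zeta 4 3%:Z = - ii. Proof. by rewrite zeta_nat zeta41 i3. Qed.
Lemma zeta4m1 : zeta 4 (- 1%:Z) = - ii.
Proof. by apply: inv_i; rewrite -zeta41 zetaN. Qed.
Lemma zeta4m2 : zeta 4 (- 2%:Z) = -1.
Proof. by move: (zetaN 4 2); rewrite zeta42 mulrN1 => /eqP; rewrite eqr_oppLR => /eqP. Qed.
Lemma zeta4m3 : zeta 4 (- 3%:Z) = ii.
Proof.
move: (zetaN 4 3); rewrite zeta43 => h.
have e : - ii * ii = 1 by rewrite mulNr -expr2 i2 opprK.
by rewrite -[LHS]mulr1 -e mulrA h mul1r.
Qed.

Definition At N c (g : C) e : {poly C} := Sc c N \Po (g *: 'X^e).

Lemma pL_hsubA a b d D c V N v e (al be : C) c' :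
  ((a * D) %/ d)%N = v -> (V - v)%N = e -> (0 < v)%N -> (v <= V)%N ->
  zeta d (- b%:Z) = al -> zeta d b%:Z = be -> c = c' ->
  eqm N (pL V N (hsub a b d D c)) ('X^e * (al%:P * At N c' be v)).
Proof.
move=> hv he v0 vV ha hb hc; subst.
by rewrite mul_polyC; apply: pL_hsub.
Qed.

Ltac zsolve := first [ exact: zeta0 | exact: zeta21 | exact: zeta2m1 | exact: zeta41
  | exact: zeta42 | exact: zeta43 | exact: zeta4m1 | exact: zeta4m2 | exact: zeta4m3 ].

Ltac hstep := apply: pL_hsubA;
  [ cbv; reflexivity | cbv; reflexivity | by [] | by [] | zsolve | zsolve | reflexivity ].

Ltac eqm_go := repeat first [ hstep | apply: eqmD | apply: eqmN | apply: eqmM | apply: eqmX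
  | apply: eqmZ | apply: eqm_refl ].

Definition rr (F : nat * bool -> nat -> C) x m := F (idx_mul (m, false) x).
Definition rr2 (F : nat * bool -> nat -> C) x m := F (idx_mul (m, true) x).

Lemma eqm_trans' N p A B : eqm N p A -> eqm N p B -> eqm N A B.
Proof. by move=> h1 h2; apply: eqm_trans (eqm_sym h1) h2. Qed.

Lemma sP2 c : size (P2 c) = 3%N. Proof. exact: size_XnsubC. Qed.

Lemma R2_t F x N : (0 < x.1)%N -> completely_replicable2 F -> (0 < N)%N ->
  Zm N ((At N (rr F x 1) 1 2)^+2 - (2 * rr F x 1 1%N)%:P * 'X^4
     - (At N (rr F x 2) 1 4 + 'X^3 * At N (rr F x 1) 1 1 - 'X^3 * At N (rr F x 1) (-1) 1
        + 'X^2 * At N (rr2 F x 1) 1 2 - 'X^2 * At N (rr2 F x 1) (-1) 2)).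
Proof.
move=> x0 HF N0.
have H := HF x x0 2%N isT (P2 (rr F x 1)) (faber2 _).
have E := pL_eq 4 N H.
rewrite -/(eqm N _ _).
apply: (eqm_trans' (p := pL 4 N (leval (P2 (rr F x 1)) (hsub 1 0 1 2 (F (idx_mul (1, false) x)))))).
  apply: eqm_trans.
    by apply: (pL_eval (n := 2) (V := 2)); [exact: eq_leq (sP2 _) | by [] | exact: N0].
  rewrite sP2 !big_ord_recr big_ord0 /= /P2 !coefB !coefXn !coefC /=.
  apply: eqm_trans; first by eqm_go.
  apply: eqm_eq.
  rewrite /rr /= -!mul_polyC; ring.
rewrite E.
rewrite pLD !pL_sum.
rewrite [X in eqm _ (X + _) _]big_mkcond [X in eqm _ (_ + X) _]big_mkcond /=.
rewrite !big_ord_recr !big_ord0 /=.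
rewrite !pL_sum !big_ord_recr !big_ord0 /=.
apply: eqm_trans; first by eqm_go.
apply: eqm_eq.
rewrite /rr /rr2 /divn /=; ring.
Qed.

Lemma sP4 c : size (P4 c) = 5%N.
Proof.
rewrite /P4; set q := \poly_(i < 4) _.
have sq : (size q < size ('X^4 : {poly C}))%N by rewrite size_polyXn ltnS size_poly.
by rewrite size_polyDl // size_polyXn.
Qed.

Lemma R4_t F N : completely_replicable2 F -> (0 < N)%N ->
  let f := F (1%N, false) in let g := F (1%N, true) in let h := F (2%N, false) in
  let G2 := F (2%N, true) in let h4 := F (4%N, false) in
  Zm N ((At N f 1 4)^+4 - (4 * f 1%N)%:P * 'X^8 * (At N f 1 4)^+2 - (4 * f 2%N)%:P * 'X^12 * At N f 1 4
        + (2 * f 1%N ^+ 2 - 4 * f 3%N)%:P * 'X^16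
     - (At N h4 1 16 + 'X^12 * At N h 1 4 - 'X^12 * At N h (-1) 4
        + 'X^15 * (At N f 1 1 - ii%:P * At N f ii 1 - At N f (-1) 1 + ii%:P * At N f (- ii) 1)
        + 'X^8 * (At N G2 1 8 - At N G2 (-1) 8)
        + 'X^14 * (At N g 1 2 - ii%:P * At N g ii 2 - At N g (-1) 2 + ii%:P * At N g (- ii) 2))).
Proof.
move=> HF N0 f g h G2 h4.
have H := HF (1%N, false) isT 4%N isT (P4 (rr F (1%N, false) 1)) (faber4 _).
have E := pL_eq 16 N H.
rewrite -/(eqm N _ _).
apply: (eqm_trans' (p := pL 16 N (leval (P4 (rr F (1%N, false) 1)) (hsub 1 0 1 4 (F (idx_mul (1, false) (1%N, false))))))).
  apply: eqm_trans.
    by apply: (pL_eval (n := 4) (V := 4)); [exact: eq_leq (sP4 _) | by [] | exact: N0].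
  rewrite sP4 !big_ord_recr big_ord0 /= /P4 !coefD !coefXn !coef_poly /=.
  apply: eqm_trans; first by eqm_go.
  apply: eqm_eq.
  rewrite /rr /f /divn /= -!mul_polyC; ring.
rewrite E.
rewrite pLD !pL_sum.
rewrite [X in eqm _ (X + _) _]big_mkcond [X in eqm _ (_ + X) _]big_mkcond /=.
rewrite !big_ord_recr !big_ord0 /=.
rewrite !pL_sum !big_ord_recr !big_ord0 /=.
apply: eqm_trans; first by eqm_go.
apply: eqm_eq.
rewrite /f /g /h /G2 /h4 /divn /=.
ring.
Qed.


Lemma At_comp N c b e g s : At N c b e \Po (g *: 'X^s) = At N c (b * g ^+ e) (s * e).
Proof.
rewrite /At -comp_polyA; congr (_ \Po _).
by rewrite comp_polyZ comp_Xn_poly exprZn -exprM scalerA.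
Qed.

Lemma XnZ_comp n g s : ('X^n : {poly C}) \Po (g *: 'X^s) = (g ^+ n)%:P * 'X^(s * n).
Proof. by rewrite comp_Xn_poly exprZn -exprM mul_polyC. Qed.

Lemma comp_polyXn' (p q : {poly C}) n : (p ^+ n) \Po q = (p \Po q) ^+ n.
Proof. exact: rmorphXn. Qed.
Lemma comp_polyN' (p q : {poly C}) : (- p) \Po q = - (p \Po q).
Proof. exact: rmorphN. Qed.

Lemma eq_Zm N p q : p = q -> Zm N p -> Zm N q. Proof. by move=> ->. Qed.

Ltac push_comp := rewrite ?(At_comp, XnZ_comp, comp_polyD, comp_polyB, comp_polyM, comp_polyN',
   comp_polyXn', comp_polyC) /=.
Ltac norm_cst := rewrite ?(expr1n, mulr1, mul1r, i2, i3, i4, mulN1r, opprK, scale1r, expr0, expr1).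


Lemma Sc9 c : Sc c 9 = 1 + (c 1%N)%:P * 'X^2 + (c 2%N)%:P * 'X^3 + (c 3%N)%:P * 'X^4
  + (c 4%N)%:P * 'X^5 + (c 5%N)%:P * 'X^6 + (c 6%N)%:P * 'X^7 + (c 7%N)%:P * 'X^8.
Proof.
apply/polyP => k; rewrite coef_poly !coefD coef1 !coefCM !coefXn.
by case: k => [|[|[|[|[|[|[|[|[|k]]]]]]]]] //=; rewrite ?mulr0 ?mulr1 ?addr0 ?add0r.
Qed.

Lemma Krel F : completely_replicable2 F ->
  F (1%N, false) 1%N ^+ 2 + 2 * F (1%N, false) 3%N - F (2%N, false) 1%N
    - 2 * F (1%N, false) 4%N - 2 * F (1%N, true) 2%N = 0.
Proof.
move=> HF.
have D := R2_t (x := (1%N, false)) (N := 9) isT HF isT.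
move: D; rewrite /At !Sc9; push_comp => D.
have h8 : Zm 9 ((F (1%N, false) 1%N ^+ 2 + 2 * F (1%N, false) 3%N - F (2%N, false) 1%N
    - 2 * F (1%N, false) 4%N - 2 * F (1%N, true) 2%N)%:P * 'X^8).
  apply: (eqmZm _ D).
  exists (((2) * F (1%N, false) 4%N ^+ 1 + (2) * F (1%N, false) 1%N ^+ 1 * F (1%N, false) 2%N ^+ 1 + (-2) * F (1%N, false) 6%N ^+ 1)%:P * 'X^1 + ((2) * F (1%N, false) 5%N ^+ 1 + (2) * F (1%N, false) 1%N ^+ 1 * F (1%N, false) 3%N ^+ 1 + (1) * F (1%N, false) 2%N ^+ 2 + (-1) * F (2%N, false) 2%N ^+ 1 + (-2) * F (1%N, true) 4%N ^+ 1)%:P * 'X^3 + ((2) * F (1%N, false) 6%N ^+ 1 + (2) * F (1%N, false) 1%N ^+ 1 * F (1%N, false) 4%N ^+ 1 + (2) * F (1%N, false) 2%N ^+ 1 * F (1%N, false) 3%N ^+ 1)%:P * 'X^5 + ((2) * F (1%N, false) 7%N ^+ 1 + (2) * F (1%N, false) 1%N ^+ 1 * F (1%N, false) 5%N ^+ 1 + (2) * F (1%N, false) 2%N ^+ 1 * F (1%N, false) 4%N ^+ 1 + (1) * F (1%N, false) 3%N ^+ 2 + (-1) * F (2%N, false) 3%N ^+ 1 + (-2) * F (1%N, true) 6%N ^+ 1)%:P * 'X^7 + ((2) * F (1%N, false) 1%N ^+ 1 * F (1%N, false) 6%N ^+ 1 + (2) * F (1%N, false) 2%N ^+ 1 * F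 (1%N, false) 5%N ^+ 1 + (2) * F (1%N, false) 3%N ^+ 1 * F (1%N, false) 4%N ^+ 1)%:P * 'X^9 + ((2) * F (1%N, false) 1%N ^+ 1 * F (1%N, false) 7%N ^+ 1 + (2) * F (1%N, false) 2%N ^+ 1 * F (1%N, false) 6%N ^+ 1 + (2) * F (1%N, false) 3%N ^+ 1 * F (1%N, false) 5%N ^+ 1 + (1) * F (1%N, false) 4%N ^+ 2 + (-1) * F (2%N, false) 4%N ^+ 1)%:P * 'X^11 + ((2) * F (1%N, false) 2%N ^+ 1 * F (1%N, false) 7%N ^+ 1 + (2) * F (1%N, false) 3%N ^+ 1 * F (1%N, false) 6%N ^+ 1 + (2) * F (1%N, false) 4%N ^+ 1 * F (1%N, false) 5%N ^+ 1)%:P * 'X^13 + ((2) * F (1%N, false) 3%N ^+ 1 * F (1%N, false) 7%N ^+ 1 + (2) * F (1%N, false) 4%N ^+ 1 * F (1%N, false) 6%N ^+ 1 + (1) * F (1%N, false) 5%N ^+ 2 + (-1) * F (2%N, false) 5%N ^+ 1)%:P * 'X^15 + ((2) * F (1%N, false) 4%N ^+ 1 * F (1%N, false) 7%N ^+ 1 + (2) * F (1%N, false) 5%N ^+ 1 * F (1%N, false) 6%N ^+ 1)%:P * 'X^17 + ((2) * F (1%N, false) 5%N ^+ 1 * F (1%N, false) 7%N ^+ 1 + (1) * F (1%N, false) 6%N ^+ 2 + (-1) * F (2%N, false) 6%N ^+ 1)%:P * 'X^19 + ((2) * F (1%N, false) 6%N ^+ 1 * F (1%N, false) 7%N ^+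 1)%:P * 'X^21 + ((1) * F (1%N, false) 7%N ^+ 2 + (-1) * F (2%N, false) 7%N ^+ 1)%:P * 'X^23).
  rewrite /rr /rr2 /idx_mul /=.
  ring.
move/ZmP: h8 => /(_ 8%N isT); rewrite coefMXn /= coefC /=.
by [].
Qed.


Lemma pL_lconst V N x : eqm N (pL V N (lconst x)) (x%:P * 'X^V).
Proof.
apply/ZmP => k kN; rewrite coefB coef_poly kN coefCM coefXn lcoefC.
rewrite subr_eq0 eqz_nat.
by case: (k == V); rewrite ?mulr1 ?mulr0 subrr.
Qed.

Lemma pL_mul_go N L1 L2 p1 p2 : (lv L1 <= 4)%N -> (lv L2 <= 4)%N ->
  eqm N (pL 4 N L1) p1 -> eqm N (pL 4 N L2) p2 -> eqm N (pL 8 N (lmul L1 L2)) (p1 * p2).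
Proof.
move=> h1 h2 e1 e2; apply: eqm_trans; first exact: (pL_mul (V1 := 4) (V2 := 4)).
exact: eqmM.
Qed.

Ltac eqm_go2 := repeat first [ hstep | apply: pL_lconst
  | (apply: pL_mul_go; [by [] | by [] | | ])
  | apply: eqmD | apply: eqmN | apply: eqmM | apply: eqmX
  | apply: eqmZ | apply: eqm_refl ].

Lemma pL_sigma2 V N xs : pL V N (lsigma2 xs) =
  \sum_(i < size xs) \sum_(j < size xs) (if (i < j)%N then pL V N (lmul (nth lzero xs i) (nth lzero xs j)) else 0).
Proof. by rewrite /lsigma2 pL_sum; apply: eq_bigr => i _; rewrite pL_sum big_mkcond. Qed.

Lemma lv_sigma2 xs V : (forall i, lv (nth lzero xs i) <= V)%N -> (lv (lsigma2 xs) <= V + V)%N.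
Proof.
move=> h; rewrite /lsigma2; apply: (big_ind (fun L => lv L <= V + V)%N) => //.
  by move=> x y hx hy /=; rewrite geq_max hx hy.
move=> i _; apply: (big_ind (fun L => lv L <= V + V)%N) => //.
  by move=> x y hx hy /=; rewrite geq_max hx hy.
by move=> j _ /=; rewrite leq_add.
Qed.

Lemma Zm_tri N (a b c d : {poly C}) : Zm N (a - b) -> Zm N (c - d) -> Zm N (b - d) -> Zm N (a - c).
Proof.
move=> h1 h2 h3; rewrite (_ : a - c = (a - b) - (c - d) + (b - d)); last by ring.
by apply: ZmD => //; apply: ZmB.
Qed.

Lemma fin_step N g s p1 p2 r1 r2 : (0 < s)%N -> eqm N p1 r1 -> eqm N p2 r2 ->
  Zm N ((r1 \Po (g *: 'X^s)) - (r2 \Po (g *: 'X^s))) ->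
  Zm N ((p1 \Po (g *: 'X^s)) - (p2 \Po (g *: 'X^s))).
Proof.
move=> s0 e1 e2 h.
have h1 := Zm_comp g s0 e1; have h2 := Zm_comp g s0 e2.
rewrite comp_polyB in h1; rewrite comp_polyB in h2.
exact: (Zm_tri h1 h2 h).
Qed.

Lemma two_neq0 : (2 : C) != 0.
Proof. by rewrite pnatr_eq0. Qed.


Theorem proposition4p11 (F : nat * bool -> nat -> C) :
  completely_replicable2 F ->
  let f := F (1%N, false) in
  let f2 := F (2%N, false) in
  let fs2 := F (1%N, true) in
  leq_ser
    (lsigma2 [:: hsub 2 0 1 2 f2; hsub 1 0 1 2 fs2; hsub 2 1 2 2 fs2;
                 hsub 1 0 2 2 f; hsub 1 1 2 2 f])
    (lsub
      (ladd (lscale (2 * f 2%N) (hsub 1 0 1 2 f))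
        (ladd (lscale (-1) (hsub 1 0 1 2 f2))
          (lconst (2 * (f 4%N - f 1%N) + 2 * fs2 2%N))))
      (lmul (hsub 1 0 1 2 fs2) (hsub 1 0 1 2 fs2))).
Proof.
move=> HF f f2 fs2 m.
set T1 := lsigma2 _. set T2 := lsub _ _.
have lv1 : (lv T1 <= 8)%N.
  rewrite /T1; apply: (lv_sigma2 (V := 4)) => i; case: i => [|[|[|[|[|i]]]]]; try by vm_compute.
  by rewrite nth_default.
have lv2 : (lv T2 <= 8)%N by vm_compute.
case: (boolP (m + 8%:Z < 0)) => hm.
  rewrite !lcoef_small //; apply: (le_lt_trans _ hm); rewrite lerD2l lez_nat //.
case E: (m + 8%:Z) => [j|j]; last by rewrite E in hm.
have mj : m = j%:Z - 8%:Z by rewrite -E addrK.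
pose N := (2 * j).+1.
have N0 : (0 < N)%N by [].
have jN : (j < N)%N by rewrite /N ltnS leq_pmull.
suff hZ : Zm N ((pL 8 N T1 \Po (1 *: 'X^2)) - (pL 8 N T2 \Po (1 *: 'X^2))).
  move/ZmP: hZ => /(_ (2 * j)%N (ltnSn _)).
  rewrite coefB !coef_comp_sX // dvdn_mulr // mulKn // !coef_poly jN -mj expr1n !mul1r.
  by move/eqP; rewrite subr_eq0 => /eqP.
pose G2 := F (2%N, true). pose h4 := F (4%N, false).
pose d1 := At N f 1 4 ^+ 2 - (2 * f 1%N)%:P * 'X^8
  - (At N f2 1 8 + 'X^6 * At N f 1 2 - 'X^6 * At N f (-1) 2 + 'X^4 * At N fs2 1 4 - 'X^4 * At N fs2 (-1) 4).
have D1 : Zm N d1.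
  move: (Zm_comp 1 (s := 2) isT (R2_t (x := (1%N, false)) isT HF N0)); apply: eq_Zm.
  push_comp; norm_cst; rewrite /d1 /rr /rr2 /idx_mul /f /f2 /fs2 /=; ring.
pose d2 := At N f 1 2 ^+ 2 - (2 * f 1%N)%:P * 'X^4
  - (At N f2 1 4 + 'X^3 * At N f 1 1 - 'X^3 * At N f (-1) 1 + 'X^2 * At N fs2 1 2 - 'X^2 * At N fs2 (-1) 2).
have D2 : Zm N d2.
  move: (R2_t (x := (1%N, false)) isT HF N0); apply: eq_Zm.
  rewrite /d2 /rr /rr2 /idx_mul /f /f2 /fs2 /=; ring.
pose d3 := At N f (-1) 2 ^+ 2 - (2 * f 1%N)%:P * 'X^4
  - (At N f2 1 4 - ii%:P * 'X^3 * At N f ii 1 + ii%:P * 'X^3 * At N f (- ii) 1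
     - 'X^2 * At N fs2 (-1) 2 + 'X^2 * At N fs2 1 2).
have D3 : Zm N d3.
  move: (Zm_comp ii (s := 1) isT (R2_t (x := (1%N, false)) isT HF N0)); apply: eq_Zm.
  push_comp; norm_cst; rewrite /d3 /rr /rr2 /idx_mul /f /f2 /fs2 /=; ring.
pose d4 := At N fs2 1 4 ^+ 2 - (2 * fs2 1%N)%:P * 'X^8
  - (At N G2 1 8 + 'X^6 * At N fs2 1 2 - 'X^6 * At N fs2 (-1) 2 + 'X^4 * At N f2 1 4 - 'X^4 * At N f2 (-1) 4).
have D4 : Zm N d4.
  move: (Zm_comp 1 (s := 2) isT (R2_t (x := (1%N, true)) isT HF N0)); apply: eq_Zm.
  push_comp; norm_cst; rewrite /d4 /rr /rr2 /idx_mul /G2 /f /f2 /fs2 /=; ring.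
pose d5 := At N fs2 (-1) 4 ^+ 2 - (2 * fs2 1%N)%:P * 'X^8
  - (At N G2 1 8 - ii%:P * 'X^6 * At N fs2 ii 2 + ii%:P * 'X^6 * At N fs2 (- ii) 2
     - 'X^4 * At N f2 (-1) 4 + 'X^4 * At N f2 1 4).
have D5 : Zm N d5.
  move: (Zm_comp ii (s := 2) isT (R2_t (x := (1%N, true)) isT HF N0)); apply: eq_Zm.
  push_comp; norm_cst; rewrite /d5 /rr /rr2 /idx_mul /G2 /f /f2 /fs2 /=; ring.
pose d6 := At N f2 1 8 ^+ 2 - (2 * f2 1%N)%:P * 'X^16
  - (At N h4 1 16 + 'X^12 * At N f2 1 4 - 'X^12 * At N f2 (-1) 4 + 'X^8 * At N G2 1 8 - 'X^8 * At N G2 (-1) 8).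
have D6 : Zm N d6.
  move: (Zm_comp 1 (s := 4) isT (R2_t (x := (2%N, false)) isT HF N0)); apply: eq_Zm.
  push_comp; norm_cst; rewrite /d6 /rr /rr2 /idx_mul /G2 /h4 /f /f2 /fs2 /=; ring.
pose d7 := (At N f 1 4)^+4 - (4 * f 1%N)%:P * 'X^8 * (At N f 1 4)^+2 - (4 * f 2%N)%:P * 'X^12 * At N f 1 4
        + (2 * f 1%N ^+ 2 - 4 * f 3%N)%:P * 'X^16
     - (At N h4 1 16 + 'X^12 * At N f2 1 4 - 'X^12 * At N f2 (-1) 4
        + 'X^15 * (At N f 1 1 - ii%:P * At N f ii 1 - At N f (-1) 1 + ii%:P * At N f (- ii) 1)
        + 'X^8 * (At N G2 1 8 - At N G2 (-1) 8)
        + 'X^14 * (At N fs2 1 2 - ii%:P * At N fs2 ii 2 - At N fs2 (-1) 2 + ii%:P * At N fs2 (- ii) 2)).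
have D7 : Zm N d7 := R4_t HF N0.
have hK : f 1%N ^+ 2 + 2 * f 3%N - f2 1%N - 2 * f 4%N - 2 * fs2 2%N = 0 := Krel HF.
pose A := At N f2 1 8. pose B1 := 'X^4 * At N fs2 1 4. pose B2 := - ('X^4 * At N fs2 (-1) 4).
pose C1 := 'X^6 * At N f 1 2. pose C2 := - ('X^6 * At N f (-1) 2).
pose T1w := A * B1 + A * B2 + A * C1 + A * C2 + B1 * B2 + B1 * C1 + B1 * C2 + B2 * C1 + B2 * C2 + C1 * C2.
pose T2w := (2 * f 2%N)%:P * 'X^12 * At N f 1 4 - 'X^12 * At N f2 1 4
   + (2 * (f 4%N - f 1%N) + 2 * fs2 2%N)%:P * 'X^16 - 'X^8 * At N fs2 1 4 ^+ 2.
have h2 : Zm N (2%:P * (T1w - T2w)).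
  rewrite (_ : 2%:P * (T1w - T2w) = d7 - (2%:P * (At N f 1 4 ^+ 2 - (2 * f 1%N)%:P * 'X^8)) * d1
     + d1 * d1 - d6 + 'X^8 * d4 - 'X^8 * d5 - 'X^12 * d2 - 'X^12 * d3
     + ((f 1%N ^+ 2 + 2 * f 3%N - f2 1%N - 2 * f 4%N - 2 * fs2 2%N) * 2)%:P * 'X^16); last first.
    rewrite /T1w /T2w /A /B1 /B2 /C1 /C2 /d1 /d2 /d3 /d4 /d5 /d6 /d7; ring.
  rewrite hK mul0r polyC0 mul0r addr0.
  by repeat first [ assumption | apply: ZmB | apply: ZmD | apply: ZmMl ].
have hT : Zm N (T1w - T2w).
  have := ZmMl (2^-1)%:P h2.
  by rewrite mulrA -polyCM mulVf ?two_neq0 // polyC1 mul1r.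
apply: fin_step => //.
- rewrite /T1 pL_sigma2 /=.
  rewrite !big_ord_recr !big_ord0 /=.
  by eqm_go2.
- rewrite /T2 pL_sub !pLD !pLZ.
  by eqm_go2.
apply: (eq_Zm _ hT).
rewrite /T1w /T2w /A /B1 /B2 /C1 /C2.
rewrite ?(At_comp, XnZ_comp, comp_polyD, comp_polyB, comp_polyM, comp_polyN',
   comp_polyXn', comp_polyC, comp_polyZ) /=.
norm_cst.
rewrite /f /f2 /fs2 /= -?mul_polyC.
ring.
Qed.
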